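(* Let $H$ be the group defined below (with sets $A_\alpha=\{n\in\omega:\eta_\alpha(n)=1\}$), let $0\to T\to G\xrightarrow{\varphi}H\to 0$ be a balanced exact sequence with $T$ a torsion group (viewed as a subgroup of $G$), and fix elements $g_\alpha\in G$ with $\varphi(g_\alpha)=y_\alpha$ ($\alpha<\kappa$) and $\tilde x_n\in G$ with $\varphi(\tilde x_n)=x_n$ ($n\in\omega$). For $\alpha<\kappa$ and $t\in T$ let $R_{\alpha,t}=\{n\in A_\alpha : g_\alpha-t-\tilde x_n \text{ is not divisible by } p_n \text{ in } G\}$. Assume that for every $\alpha<\kappa$ there exists $t_\alpha\in T$ such that $R_{\alpha,t_\alpha}$ is finite. Then there is a homomorphism $\psi:H\to G$ with $\varphi\psi=\mathrm{id}_H$; hence the sequence splits.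
   Context: All groups are abelian. A pure subgroup $A$ of a torsion-free group $G$ is balanced if every coset $g+A$ contains an element $g+a$ ($a\in A$) whose characteristic is $\geq$ that of $g+x$ for all $x\in A$; an exact sequence $0\to A\to G\to C\to0$ is balanced exact if the image of $A$ is balanced in $G$. Setting: $\kappa$ is an uncountable cardinal, $\eta_\alpha:\omega\to 2$ ($\alpha<\kappa$) are the Cohen reals added by the forcing of finite partial functions $\kappa\times\omega\to 2$ (the lemma is considered in the generic extension). Fix primes $p_0<p_1<\cdots$; let $W=\bigoplus_{n\in\omega}\mathbb{Q}x_n\oplus\bigoplus_{\alpha<\kappa}\mathbb{Q}y_\alpha$ on independent elements, $F=\bigoplus_n\mathbb{Z}x_n\oplus\bigoplus_{\alpha<\kappa}\mathbb{Z}y_\alpha$, and $H$ the subgroup of $W$ generated by $F$ and all $p_n^{-1}(y_\alpha-x_n)$ with $\eta_\alpha(n)=1$. *)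

(* Defs.v *)
From HB Require Import structures.
From mathcomp Require Import all_boot all_order all_algebra.
From mathcomp Require Import boolp functions.
Set Implicit Arguments. Unset Strict Implicit. Unset Printing Implicit Defensive.
Import Order.TTheory GRing.Theory Num.Theory.
Local Open Scope ring_scope.

(* An element of W is represented as a
   function [nat + K -> rat] (coordinates w.r.t. x_n = inl n, y_a = inr a);
   the group structure is pointwise (instance from mathcomp-classical). H is a
   subgroup of the finitely supported functions, so this ambient choice does
   not change H. *)
Definition W (K : Type) := (nat + K -> rat)%type.

Definition xv (K : Type) (n : nat) : W K :=
  fun j => match j with inl m => if m == n then 1 else 0 | inr _ => 0 end.
Definition yv (K : eqType) (a : K) : W K :=
  fun j => match j with inl _ => 0 | inr b => if b == a then 1 else 0 end.

Inductive inH (K : eqType) (p : nat -> nat) (eta : K -> nat -> bool) : W K -> Prop :=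
| inH0 : inH p eta 0
| inHx n : inH p eta (@xv K n)
| inHy a : inH p eta (yv a)
| inHz a n : eta a n = true ->
    inH p eta (fun j => (p n)%:R^-1 * (yv a j - @xv K n j))
| inHsub u v : inH p eta u -> inH p eta v -> inH p eta (u - v).

Definition divisible (G : zmodType) (m : nat) (g : G) : Prop :=
  exists h : G, g = h *+ m.

Definition subgroup (G : zmodType) (A : G -> Prop) : Prop :=
  A 0 /\ forall a b, A a -> A b -> A (a - b).

Definition torsion_pred (G : zmodType) (A : G -> Prop) : Prop :=
  forall a, A a -> exists2 n : nat, (0 < n)%N & a *+ n = 0.

Definition pure (G : zmodType) (A : G -> Prop) : Prop :=
  forall (a : G) (m : nat), A a -> divisible m a ->
    exists2 b, A b & a = b *+ m.

Definition char_ge (G : zmodType) (u v : G) : Prop :=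
  forall p k : nat, prime p -> divisible (p ^ k) v -> divisible (p ^ k) u.

Definition balanced (G : zmodType) (A : G -> Prop) : Prop :=
  pure A /\
  forall g : G, exists2 a, A a & forall x, A x -> char_ge (g + a) (g + x).

(* Main.v *)
Require Import Defs.
From HB Require Import structures.
From mathcomp Require Import all_boot all_order all_algebra.
From mathcomp Require Import boolp functions.
From mathcomp Require Import ring lra.
Import GRing.Theory Num.Theory.
Local Open Scope ring_scope.
Set Implicit Arguments. Unset Strict Implicit. Unset Printing Implicit Defensive.

Section Gen.
Variable K : eqType.
Inductive gen := GX of nat | GY of K | GZ of K & nat.
Definition geq (a b : gen) : bool := match a, b with
 | GX n, GX m => n == m | GY x, GY y => x == y
 | GZ x n, GZ y m => (x == y) && (n == m) | _, _ => false end.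
Lemma geqP a b : reflect (a = b) (geq a b).
Proof.
case: a; case: b => //= *; try (by constructor);
  try (apply: (iffP eqP); [move->|case]; done).
apply: (iffP andP) => [[/eqP-> /eqP->]|[->->]] //.
Qed.
HB.instance Definition _ := hasDecEq.Build gen geqP.
Lemma geqxx a : geq a a. Proof. exact/geqP. Qed.
Definition isZ (t : gen) := if t is GZ _ _ then true else false.

Section Model.
Variables (M : zmodType) (vx : nat -> M) (vy : K -> M) (vz : K -> nat -> M).
Definition vg (t : gen) := match t with GX n => vx n | GY a => vy a | GZ a n => vz a n end.
Fixpoint ev (L : seq (gen * int)) : M := if L is t :: L' then vg t.1 *~ t.2 + ev L' else 0.
Lemma ev_cat L1 L2 : ev (L1 ++ L2) = ev L1 + ev L2.
Proof. by elim: L1 => [|t L IH] /=; rewrite ?add0r // IH addrA. Qed.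
Definition negL (L : seq (gen * int)) := map (fun t => (t.1, - t.2)) L.
Lemma ev_neg L : ev (negL L) = - ev L.
Proof. by elim: L => [|t L IH] /=; rewrite ?oppr0 // IH mulrNz opprD. Qed.
Definition coef c (L : seq (gen * int)) := \sum_(t <- L | geq c t.1) t.2.
Definition rest c (L : seq (gen * int)) := filter (fun t => ~~ geq c t.1) L.
Lemma ev_split c L : ev L = ev (rest c L) + vg c *~ coef c L.
Proof.
rewrite /coef /rest; elim: L => [|t L IH] /=; first by rewrite big_nil mulr0z addr0.
rewrite big_cons; case: (geqP c t.1) => [<-|_] /=; rewrite IH.
  by rewrite mulrzDr addrCA.
by rewrite addrA.
Qed.
End Model.
End Gen.
Arguments GX {K} _.


Lemma fz_pt (T : Type) (M : zmodType) (f : T -> M) (k : int) j : (f *~ k) j = f j *~ k.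
Proof.
case: k => n; first by rewrite -!pmulrn natmulfctE.
by rewrite !NegzE !mulrNz -!pmulrn natmulfctE.
Qed.

Definition isInt (x : rat) := exists z : int, x = z%:~R.
Lemma isIntD x y : isInt x -> isInt y -> isInt (x + y).
Proof. by move=> [a ->] [b ->]; exists (a + b); rewrite intrD. Qed.
Lemma isIntM x y : isInt x -> isInt y -> isInt (x * y).
Proof. by move=> [a ->] [b ->]; exists (a * b); rewrite intrM. Qed.

Section Core.
Variables (K : eqType) (p : nat -> nat) (eta : K -> nat -> bool).
Hypothesis p_prime : forall n, prime (p n).
Hypothesis p_inj : injective p.

Definition vzW (a : K) (n : nat) : W K := fun j => (p n)%:R^-1 * (yv a j - @xv K n j).
Definition evW := ev (@xv K) (@yv K) vzW.
Definition okL (L : seq (gen K * int)) := all (fun t => if t.1 is GZ a n then eta a n else true) L.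
Definition relM (M : zmodType) (vx : nat -> M) (vy : K -> M) (vz : K -> nat -> M) :=
  forall a n, eta a n -> vy a - vx n = vz a n *+ p n.

Lemma relW : relM (@xv K) (@yv K) vzW.
Proof.
move=> a n _; rewrite natmulfctE; apply/funext => j /=.
rewrite /vzW; change (yv a j - xv n j = (p n)%:R^-1 * (yv a j - xv n j) *+ p n).
move: (yv a j - xv n j) => D.
have hp : (p n)%:R != 0 :> rat by rewrite pnatr_eq0 -lt0n prime_gt0.
by rewrite -[RHS]mulr_natr mulrAC mulVf ?mul1r.
Qed.

Lemma evW_pt L j : evW L j = \sum_(t <- L) vg (@xv K) (@yv K) vzW t.1 j *~ t.2.
Proof.
elim: L => [|t L IH]; first by rewrite big_nil.
by rewrite big_cons -IH /evW /= addrfctE fz_pt.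
Qed.

Definition crd (c : gen K) : nat + K :=
  match c with GX n => inl n | GY a => inr a | GZ a n => inr a end.

Lemma vgW_crd c : ~~ isZ c -> vg (@xv K) (@yv K) vzW c (crd c) = 1.
Proof. by case: c => //= [n|a] _; rewrite eqxx. Qed.

Lemma vgW_crd0 c t : ~~ isZ c -> ~~ isZ t -> ~~ geq c t ->
  vg (@xv K) (@yv K) vzW t (crd c) = 0.
Proof.
case: c => [n|a|a n] //= _; case: t => [m|b|b m] //= _.
  by rewrite eq_sym => /negbTE ->.
by rewrite eq_sym => /negbTE ->.
Qed.

Lemma evW_crd0 c L : ~~ isZ c -> all (fun t => ~~ isZ t.1 && ~~ geq c t.1) L ->
  evW L (crd c) = 0.
Proof.
move=> Hc; rewrite evW_pt; elim: L => [|t L IH] /=; first by rewrite big_nil.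
case/andP => /andP [H1 H2] HL; rewrite big_cons IH // vgW_crd0 //.
by rewrite mul0rz add0r.
Qed.

End Core.

Section Core2.
Variables (K : eqType) (p : nat -> nat) (eta : K -> nat -> bool).
Hypothesis p_prime : forall n, prime (p n).
Hypothesis p_inj : injective p.
Local Notation evW := (@evW K p).
Local Notation vzW := (@vzW K p).
Local Notation okL := (@okL K eta).
Local Notation relM := (@relM K p eta).

Lemma p_neq0 n : (p n)%:R != 0 :> rat.
Proof. by rewrite pnatr_eq0 -lt0n prime_gt0. Qed.

Lemma isInt_nat n : isInt n%:R.
Proof. by exists n%:Z; rewrite pmulrn. Qed.

Lemma baseB (M : zmodType) (vx : nat -> M) vy vz L :
  all (fun t => ~~ isZ t.1) L -> evW L = 0 -> ev vx vy vz L = 0.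
Proof.
have [k] := ubnP (size L); elim: k L => // k IH L Hs HZ HW.
case: L Hs HZ HW => [|t L'] // Hs HZ HW.
set c := t.1.
have hc : ~~ isZ c by case/andP: HZ.
have HW' := HW; rewrite /evW (ev_split _ _ _ c) in HW'.
have Hall : all (fun t => ~~ isZ t.1 && ~~ geq c t.1) (rest c (t :: L')).
  apply/allP => u; rewrite mem_filter => /andP [-> uL] /=.
  by rewrite (allP HZ).
have H0 := evW_crd0 p hc Hall.
have H1 : (evW (rest c (t :: L')) + vg (@xv K) (@yv K) vzW c *~ coef c (t :: L')) (crd c) = 0.
  by rewrite /evW HW'.
rewrite addrfctE fz_pt H0 vgW_crd // add0r in H1.
move/eqP: H1; rewrite intr_eq0 => /eqP Hk.
rewrite (ev_split _ _ _ c) Hk mulr0z addr0; apply: IH.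
- rewrite /rest /= geqxx /= size_filter.
  by move: Hs; rewrite /= ltnS => Hs; exact: leq_ltn_trans (count_size _ _) Hs.
- by apply/allP => u; rewrite mem_filter => /andP [_ uL]; rewrite (allP HZ).
- by move: HW'; rewrite Hk mulr0z addr0.
Qed.

Definition qa (a : K) (t : gen K) : nat :=
  if t is GZ b m then (if b == a then p m else 1%N) else 1%N.
Definition QL a (L : seq (gen K * int)) := (\prod_(t <- L) qa a t.1)%N.

Lemma intQ a L : isInt ((QL a L)%:R * evW L (inr a)).
Proof.
rewrite /QL; elim: L => [|t L IH]; first by exists 0; rewrite big_nil mul1r.
rewrite big_cons /evW /= addrfctE fz_pt /=.
set q := qa a t.1; set Q := (\prod_(_ <- _) _)%N in IH *.
set v := vg _ _ _ t.1 (inr a); set E := ev _ _ _ L (inr a) in IH *.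
have -> : (q * Q)%N%:R * (v *~ t.2 + E) =
   Q%:R * ((q%:R * v) * t.2%:~R) + q%:R * (Q%:R * E).
  by rewrite natrM -mulrzr; ring.
apply: isIntD; apply: isIntM; [exact: isInt_nat| |exact: isInt_nat|exact: IH].
apply: isIntM; last by exists t.2.
rewrite /q /v; case: t.1 => [m|b|b m] /=.
- by exists 0; rewrite mulr0.
- by exists (if a == b then 1 else 0); case: (a == b); rewrite mul1r.
- rewrite /vzW /=; case Hba: (b == a); rewrite eq_sym Hba.
    by exists 1; rewrite subr0 mulr1 mulfV ?p_neq0.
  by exists 0; rewrite subr0 !mulr0.
Qed.

Lemma coprimeQ a n L : all (fun t => ~~ geq (GZ a n) t.1) L -> coprime (p n) (QL a L).
Proof.
rewrite /QL; elim: L => [|t L IH] /=; first by rewrite big_nil coprimen1.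
case/andP => Ht HL; rewrite big_cons coprimeMr IH // andbT.
move: Ht; case: t.1 => [m|b m|b m] /=; rewrite ?coprimen1 //.
case Hba: (b == a); rewrite ?coprimen1 // eq_sym Hba /= => Hnm.
rewrite prime_coprime // dvdn_prime2 //; apply/eqP => /p_inj Hp.
by rewrite Hp eqxx in Hnm.
Qed.

Lemma divk a n L0 k : all (fun t => ~~ geq (GZ a n) t.1) L0 ->
  evW L0 + vzW a n *~ k = 0 -> exists j : int, k = j * (p n)%:Z.
Proof.
move=> Hall HW.
have H1 : (evW L0 + vzW a n *~ k) (inr a) = 0 by rewrite HW.
rewrite addrfctE fz_pt in H1.
have Hv : vzW a n (inr a) = (p n)%:R^-1 by rewrite /vzW /= eqxx subr0 mulr1.
move/eqP: H1; rewrite Hv addr_eq0 => /eqP HE.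
have [z Hz] := intQ a L0; rewrite HE in Hz.
have Hint : (- ((QL a L0)%:Z * k) = z * (p n)%:Z)%R.
  apply: (@intr_inj rat); rewrite intrN !intrM -!pmulrn -Hz -mulrzr.
  by field; rewrite p_neq0.
have : (p n %| `|((QL a L0)%:Z * k)%R|)%N.
  by rewrite -abszN Hint abszM dvdn_mull.
rewrite abszM Gauss_dvdr; last exact: coprimeQ.
by move=> H; apply/dvdzP.
Qed.

Lemma ev_elim (M : zmodType) (vx : nat -> M) vy vz a n j L0 : eta a n -> relM vx vy vz ->
  ev vx vy vz ((GY a, j) :: (GX n, -j) :: L0) = ev vx vy vz L0 + vz a n *~ (j * (p n)%:Z).
Proof.
move=> He Hr /=; rewrite mulrNz addrA addrC; congr (_ + _).
by rewrite -mulrzBl Hr // mulrC mulrzA -pmulrn.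
Qed.

Lemma count_rest_le (c : gen K) (L : seq (gen K * int)) : (count (fun t => isZ t.1) (rest c L) <= count (fun t => isZ t.1) L)%N.
Proof.
elim: L => [|t L IH] //=; case: (geq c t.1) => /=.
  by apply: leq_trans IH _; apply: leq_addl.
by rewrite leq_add2l.
Qed.

Lemma count_rest_lt (c : gen K) (L : seq (gen K * int)) t : t \in L -> t.1 = c -> isZ c ->
  (count (fun t => isZ t.1) (rest c L) < count (fun t => isZ t.1) L)%N.
Proof.
elim: L => [|u L IH] //=; rewrite in_cons => /orP [/eqP<- <- Hz|tL Htc Hz].
  by rewrite geqxx /= Hz add1n ltnS count_rest_le.
case: (geqP c u.1) => [Hu|_] /=.
  by rewrite -Hu Hz add1n ltnS count_rest_le.
by rewrite ltn_add2l IH.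
Qed.

Lemma core (M : zmodType) (vx : nat -> M) vy vz (Hr : relM vx vy vz) L :
  okL L -> evW L = 0 -> ev vx vy vz L = 0.
Proof.
have [k] := ubnP (count (fun t => isZ t.1) L); elim: k L => // k IH L Hc Hok HW.
case: (boolP (has (fun t => isZ t.1) L)) => [/hasP [t tL tZ] | hnZ]; last first.
  apply: baseB => //; apply/allP => t tL; apply/negP => h; case/hasP: hnZ.
  by exists t.
move: tZ (allP Hok t tL); case Et: t.1 => [m|b|a n] //= _ He.
set c := GZ a n.
have Hall : all (fun t => ~~ geq c t.1) (rest c L).
  by apply/allP => u; rewrite mem_filter => /andP [].
have HW' := HW; rewrite /evW (ev_split _ _ _ c) in HW'.
have [j Hj] := divk Hall HW'.
rewrite (ev_split _ _ _ c) Hj -(ev_elim j (rest c L) He Hr).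
apply: IH.
- rewrite /= ?add0n; apply: leq_trans (count_rest_lt tL Et _) _ => //.
- rewrite /okL /=; apply/allP => u; rewrite mem_filter => /andP [_ uL].
  exact: (allP Hok).
- by rewrite /evW (ev_elim j (rest c L) He (@relW K p eta p_prime)) -Hj.
Qed.

End Core2.

Lemma div0 (G : zmodType) m : divisible m (0 : G).
Proof. by exists 0; rewrite mul0rn. Qed.
Lemma divB (G : zmodType) m (x y : G) : divisible m x -> divisible m y -> divisible m (x - y).
Proof. by move=> [a ->] [b ->]; exists (a - b); rewrite mulrnBl. Qed.
Lemma divD (G : zmodType) m (x y : G) : divisible m x -> divisible m y -> divisible m (x + y).
Proof. by move=> [a ->] [b ->]; exists (a + b); rewrite mulrnDl. Qed.
Lemma div_sum (G : zmodType) m (I : Type) (r : seq I) (P : pred I) (F : I -> G) :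
  (forall i, P i -> divisible m (F i)) -> divisible m (\sum_(i <- r | P i) F i).
Proof. move=> H; apply: big_ind => //; [exact: div0 | exact: divD]. Qed.

Lemma wlem (G : zmodType) (D : G) (k q : nat) : prime q -> (0 < k)%N -> D *+ k = 0 ->
  exists c : nat, divisible q (D - D *+ c) /\
    forall r, prime r -> r != q -> divisible r (D *+ c).
Proof.
move=> qp k0 Hk; have [m cop Ek] := pfactor_coprime qp k0.
have m0 : (0 < m)%N by move: k0; rewrite Ek; case: m {cop Ek}.
case: (@egcdnP m q m0) => km kn Hm _.
have g1 : gcdn m q = 1%N by move: cop; rewrite coprime_sym => /eqP.
rewrite g1 in Hm.
exists (m * km)%N; split.
  exists (- (D *+ kn)); rewrite mulnC Hm mulrnDr mulr1n mulrnA opprD addrCA subrr addr0.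
  by rewrite mulNrn.
move=> r rp rq.
have cr : coprime r (q ^ logn q k).
  by apply: coprimeXr; rewrite prime_coprime // dvdn_prime2 //.
case: (@egcdnP r (q ^ logn q k) (prime_gt0 rp)) => kr ke Hr _.
rewrite (eqP cr) in Hr.
have Hw0 : D *+ (m * km) *+ (q ^ logn q k) = 0.
  by rewrite -mulrnA mulnAC -Ek mulrnA Hk mul0rn.
exists (D *+ (m * km) *+ kr).
by rewrite -mulrnA Hr mulrnDr mulr1n [(ke * _)%N]mulnC mulrnA Hw0 mul0rn add0r.
Qed.

Lemma choice2 (A B C : Type) (P : A -> B -> C -> Prop) :
  (forall a b, exists c, P a b c) -> exists f : A -> B -> C, forall a b, P a b (f a b).
Proof.
move=> H; have H' : forall a, exists f : B -> C, forall b, P a b (f b).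
  by move=> a; have [f Hf] := choice (H a); exists f.
by have [f Hf] := choice H'; exists f.
Qed.

Lemma rearr (G : zmodType) (g t w R x d : G) :
  g - t - (w + R) - x = (g - x - d) + ((d - t) - w) - R.
Proof.
by rewrite opprD !addrA subrK -!addrA; congr (_ + _); rewrite !addrA [LHS]addrC !addrA.
Qed.

Theorem lemma4p6
  (K : eqType) (Kuncountable : ~ exists f : K -> nat, injective f)
  (p : nat -> nat) (p_prime : forall n, prime (p n))
  (p_incr : forall n m, (n < m)%N -> (p n < p m)%N)
  (eta : K -> nat -> bool)
  (G : zmodType) (T : G -> Prop) (phi : {additive G -> W K})
  (T_sub : subgroup T) (T_tors : torsion_pred T)
  (phi_in : forall g, inH p eta (phi g))
  (phi_onto : forall h, inH p eta h -> exists g, phi g = h)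
  (phi_ker : forall g, phi g = 0 <-> T g)
  (T_bal : balanced T)
  (g : K -> G) (g_lift : forall a, phi (g a) = yv a)
  (xt : nat -> G) (xt_lift : forall n, phi (xt n) = @xv K n)
  (hyp : forall a, exists2 ta, T ta &
      exists N : nat, forall n, eta a n = true ->
        ~ divisible (p n) (g a - ta - xt n) -> (n < N)%N) :
  exists psi : W K -> G,
    (forall u v, inH p eta u -> inH p eta v -> psi (u - v) = psi u - psi v) /\
    (forall h, inH p eta h -> phi (psi h) = h).
Proof.
have p_inj : injective p.
  move=> n m E; case: (ltngtP n m) => // H; have := p_incr _ _ H; by rewrite E ltnn.
have hyp' : forall a, exists t, T t /\ exists N : nat, forall n, eta a n = true ->
        ~ divisible (p n) (g a - t - xt n) -> (n < N)%N.
  by move=> a; case: (hyp a) => t Ht HN; exists t.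
have [ta Hta] := choice hyp'.
have [N HN] := choice (fun a => (proj2 (Hta a))).
have Tta a : T (ta a) by case: (Hta a).
have Hd : forall a n, exists d, eta a n -> T d /\ divisible (p n) (g a - xt n - d).
  move=> a n; case: (boolP (eta a n)) => e; last by exists 0.
  have [w Hw] := phi_onto _ (inHz p e).
  exists (g a - xt n - w *+ p n) => _; split; last first.
    by exists w; rewrite opprB addrC subrK.
  apply/phi_ker; rewrite !raddfB /= raddfMn /= Hw g_lift xt_lift.
  by rewrite -(@relW K p eta p_prime a n e) subrr.
have [d0 Hd0] := choice2 Hd.
pose d a n := d0 a n.
have TD : forall a n, eta a n -> T (d a n - ta a).
  by move=> a n e; apply: (proj2 T_sub); [case: (Hd0 a n e)|].
have Hc : forall a n, exists c : nat, eta a n ->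
    divisible (p n) ((d a n - ta a) - (d a n - ta a) *+ c) /\
    forall r, prime r -> r != p n -> divisible r ((d a n - ta a) *+ c).
  move=> a n; case: (boolP (eta a n)) => e; last by exists 0%N.
  have [k k0 Hk] := T_tors _ (TD a n e).
  have [c Hc] := wlem (p_prime n) k0 Hk; by exists c.
have [c0 Hc0] := choice2 Hc.
pose w a n := (d a n - ta a) *+ c0 a n.
have phiw a n : eta a n -> phi (w a n) = 0.
  by move=> e; rewrite /w raddfMn /=; move/phi_ker: (TD a n e) => ->; rewrite mul0rn.
pose u a := \sum_(m < N a | eta a m) w a m.
pose Y a := g a - ta a - u a.
pose X n := xt n.
have phiY a : phi (Y a) = yv a.
  rewrite /Y !raddfB /= g_lift; move/phi_ker: (Tta a) => ->.
  rewrite raddf_sum big1 ?subr0 // => i e; exact: phiw.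
have divY : forall a n, eta a n -> divisible (p n) (Y a - X n).
  move=> a n e.
  have Rdiv : forall (P : pred 'I_(N a)), (forall i : 'I_(N a), P i -> eta a i /\ (i : nat) != n) ->
      divisible (p n) (\sum_(i < N a | P i) w a i).
    move=> P HP; apply: div_sum => i /HP [ei ni].
    have := proj2 (Hc0 a i ei) (p n) (p_prime n).
    apply; apply/eqP => /p_inj Hin; by rewrite Hin eqxx in ni.
  case: (ltnP n (N a)) => Hn.
    rewrite /Y /u (bigD1 (Ordinal Hn)) //=.
    have -> : g a - ta a - (w a n + \sum_(i < N a | eta a i && (i != Ordinal Hn)) w a i) - X n
      = (g a - xt n - d a n) + ((d a n - ta a) - w a n)
         - \sum_(i < N a | eta a i && (i != Ordinal Hn)) w a i.
      exact: rearr.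
    apply: divB; first apply: divD.
    - by case: (Hd0 a n e).
    - exact: (proj1 (Hc0 a n e)).
    - by apply: Rdiv => i /andP [ei ni]; split => //.
  rewrite /Y addrAC; apply: divB.
    case: (pselect (divisible (p n) (g a - ta a - xt n))) => // nd.
    by have := HN a n e nd; rewrite ltnNge Hn.
  apply: Rdiv => i ei; split => //.
  by rewrite neq_ltn (leq_trans (ltn_ord i) Hn).
have HZ : forall a n, exists z, eta a n -> Y a - X n = z *+ p n.
  move=> a n; case: (boolP (eta a n)) => e; last by exists 0.
  by have [z Hz] := divY a n e; exists z.
have [Z HZ'] := choice2 HZ.
have relG : relM p eta X Y Z by move=> a n e; exact: HZ' a n e.
have phiZ a n : eta a n -> phi (Z a n) = vzW p a n.
  move=> e.
  have H1 : phi (Z a n) *+ p n = vzW p a n *+ p n.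
    rewrite -raddfMn -(HZ' a n e) raddfB phiY /X xt_lift.
    exact: (@relW K p eta p_prime a n e).
  apply/funext => j.
  have H2 : phi (Z a n) j *+ p n = vzW p a n j *+ p n.
    by have := congr1 (fun f => f j) H1; rewrite !natmulfctE.
  rewrite -[LHS]mulr_natr -[RHS]mulr_natr in H2; exact: (mulIf (@p_neq0 p p_prime n) H2).
have phi_ev L : okL eta L -> phi (ev X Y Z L) = evW p L.
  elim: L => [|t L IH] /=; first by rewrite raddf0.
  case/andP => Ht HL; rewrite raddfD /= raddfMz IH //; congr (_ *~ _ + _).
  by move: Ht; case: t.1 => [n|a|a n] /= => [_|_|e]; rewrite ?xt_lift ?phiY ?phiZ.
have Hsurj : forall h, inH p eta h -> exists L, okL eta L /\ evW p L = h.
  move=> h; elim => [|n|a|a n e|u0 v0 _ [L1 [o1 E1]] _ [L2 [o2 E2]]].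
  - by exists [::].
  - by exists [:: (GX n, 1)]; rewrite /evW /= mulr1z addr0.
  - by exists [:: (GY a, 1)]; rewrite /evW /= mulr1z addr0.
  - by exists [:: (GZ a n, 1)]; rewrite /evW /okL /= e mulr1z addr0.
  - exists (L1 ++ negL L2); split; last by rewrite /evW ev_cat ev_neg; rewrite /evW in E1 E2; rewrite E1 E2.
    by rewrite /okL all_cat; apply/andP; split; [exact: o1 | rewrite all_map; exact: o2].
pose psi h := match pselect (exists L, okL eta L /\ evW p L = h) with
  | left P => ev X Y Z (projT1 (cid P)) | right _ => 0 end.
have psi_spec h : inH p eta h -> exists L, [/\ okL eta L, evW p L = h & psi h = ev X Y Z L].
  move=> hH; rewrite /psi; case: pselect => [P|nP]; last by case: nP; exact: Hsurj.
  by case: (cid P) => L [o E] /=; exists L.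
exists psi; split.
  move=> x y xH yH.
  have [L1 [o1 E1 ->]] := psi_spec _ xH.
  have [L2 [o2 E2 ->]] := psi_spec _ yH.
  have [L3 [o3 E3 ->]] := psi_spec _ (inHsub xH yH).
  apply/eqP; rewrite -subr_eq0; apply/eqP.
  have -> : ev X Y Z L3 - (ev X Y Z L1 - ev X Y Z L2) =
    ev X Y Z (L3 ++ negL (L1 ++ negL L2)) by rewrite ev_cat ev_neg ev_cat ev_neg.
  apply: (core p_prime p_inj relG).
    rewrite /okL all_cat; apply/andP; split; first exact: o3.
    rewrite all_map all_cat; apply/andP; split; first exact: o1.
    rewrite all_map; exact: o2.
  rewrite /evW ev_cat ev_neg ev_cat ev_neg; rewrite /evW in E1 E2 E3.
  by rewrite E1 E2 E3 subrr.
move=> h hH; have [L [o E ->]] := psi_spec _ hH; by rewrite phi_ev.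
Qed.
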